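(* (a) There is an SSSCG with one follower, in which the leader's cost functions are weakly monotonic but the follower's are not, whose unique OSE and unique PSE prescribe the leader a mixed strategy: $R=\{r_1,r_2\}$, $c_{r_k,\ell}(1)=1$, $c_{r_k,\ell}(2)=2$, $c_{r_k,f}(1)=2$, $c_{r_k,f}(2)=1$ for $k=1,2$; the leader's equilibrium strategy is $\sigma_\ell(r_1)=\sigma_\ell(r_2)=\tfrac12$. (b) There is an SSSCG with one follower, in which the follower's cost functions are weakly monotonic but the leader's are not, whose unique OSE and unique PSE prescribe the leader a mixed strategy: $R=\{r_1,r_2\}$, $c_{r_k,\ell}(1)=2$, $c_{r_k,\ell}(2)=0$, $c_{r_k,f}(1)=1$, $c_{r_k,f}(2)=2$ for $k=1,2$; the leader's equilibrium strategy is $\sigma_\ell(r_1)=\sigma_\ell(r_2)=\tfrac12$.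
   Context: A symmetric Stackelberg singleton congestion game (SSSCG) consists of a leader $\ell$, a finite set $F$ of followers, a finite set $R$ of resources which every player may select (each player selects exactly one), and cost functions $c_{i,\ell},c_{i,f}:\mathbb N\to\mathbb Q$ ($i\in R$) for the leader and the followers with $c_{i,\ell}(0)=c_{i,f}(0)=0$. The leader commits to a probability distribution $\sigma_\ell$ on $R$ (pure if it puts probability $1$ on one resource). A followers' configuration is $\nu\in\mathbb N^R$ with $\sum_i\nu_i=|F|$. The followers' expected cost of resource $i$ with $x$ followers is $c^{\sigma_\ell}_{i,f}(x)=\sigma_\ell(i)c_{i,f}(x+1)+(1-\sigma_\ell(i))c_{i,f}(x)$; the leader's cost is $c_\ell^{(\sigma_\ell,\nu)}=\sum_{i\in R}\sigma_\ell(i)c_{i,\ell}(\nu_i+1)$. $\nu$ is a Nash equilibrium for $\sigma_\ell$ ($\nu\in E^{\sigma_\ell}$) if for all $i$ with $\nu_i>0$ and all $j\ne i$, $c^{\sigma_\ell}_{i,f}(\nu_i)\le c^{\sigma_\ell}_{j,f}(\nu_j+1)$. An OSE is a pair $(\sigma_\ell,\nu)$ with $\nu\in E^{\sigma_\ell}$ minimizing $c_\ell^{(\sigma_\ell,\nu)}$ over all such pairs. A PSE is a pair $(\sigma_\ell,\nu)$ such that $\sigma_\ell$ attains the minimum over all leader strategies of $\max_{\nu'\in E^{\sigma_\ell}}c_\ell^{(\sigma_\ell,\nu')}$ and $\nu\in E^{\sigma_\ell}$ attains that maximum. Weakly monotonic: $c(x)\le c(x+1)$ for all $x$. *)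

(* Defs.v *)
From HB Require Import structures.
From mathcomp Require Import all_boot all_order all_algebra.
Set Implicit Arguments. Unset Strict Implicit. Unset Printing Implicit Defensive.
Import Order.TTheory GRing.Theory Num.Theory.
Local Open Scope ring_scope.

(* A game is given by a finite resource type R, the number n = |F| of
   followers, and cost functions cl (leader) and cf (followers) : R -> nat -> rat
   with cl i 0 = cf i 0 = 0. *)

Definition cost_fun_zero (c : nat -> rat) : Prop := c 0%N = 0.

Definition weakly_monotonic (c : nat -> rat) : Prop :=
  forall x : nat, c x <= c x.+1.

Definition is_leader_strategy (R : finType) (s : {ffun R -> rat}) : Prop :=
  (forall i, 0 <= s i) /\ \sum_(i : R) s i = 1.

Definition is_config (R : finType) (n : nat) (nu : {ffun R -> nat}) : Prop :=
  (\sum_(i : R) nu i)%N = n.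

Definition fcost (R : finType) (cf : R -> nat -> rat) (s : {ffun R -> rat})
  (i : R) (x : nat) : rat :=
  s i * cf i x.+1 + (1 - s i) * cf i x.

Definition lcost (R : finType) (cl : R -> nat -> rat) (s : {ffun R -> rat})
  (nu : {ffun R -> nat}) : rat :=
  \sum_(i : R) s i * cl i (nu i).+1.

Definition is_NE (R : finType) (n : nat) (cf : R -> nat -> rat)
  (s : {ffun R -> rat}) (nu : {ffun R -> nat}) : Prop :=
  is_config n nu /\
  forall i j : R, (0 < nu i)%N -> j != i ->
    fcost cf s i (nu i) <= fcost cf s j (nu j).+1.

Definition is_OSE (R : finType) (n : nat) (cl cf : R -> nat -> rat)
  (s : {ffun R -> rat}) (nu : {ffun R -> nat}) : Prop :=
  is_leader_strategy s /\ is_NE n cf s nu /\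
  forall s' nu', is_leader_strategy s' -> is_NE n cf s' nu' ->
    lcost cl s nu <= lcost cl s' nu'.

(* Pessimistic Stackelberg equilibrium: nu attains max_{nu' in E^s} of the
   leader cost (so this value is M(s)), and for every leader strategy s' the
   value M(s') = max_{nu' in E^{s'}} lcost s' nu' is at least M(s), i.e. some
   nu' in E^{s'} has lcost s' nu' >= lcost s nu. *)
Definition is_PSE (R : finType) (n : nat) (cl cf : R -> nat -> rat)
  (s : {ffun R -> rat}) (nu : {ffun R -> nat}) : Prop :=
  is_leader_strategy s /\ is_NE n cf s nu /\
  (forall nu', is_NE n cf s nu' -> lcost cl s nu' <= lcost cl s nu) /\
  forall s', is_leader_strategy s' ->
    exists2 nu', is_NE n cf s' nu' & lcost cl s nu <= lcost cl s' nu'.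

(* Main.v *)
Require Import Defs.
From HB Require Import structures.
From mathcomp Require Import all_boot all_order all_algebra.
From mathcomp Require Import lra.
Set Implicit Arguments. Unset Strict Implicit.
Import Order.TTheory GRing.Theory Num.Theory.
Local Open Scope ring_scope.

Definition i0 : 'I_2 := @Ordinal 2 0 isT.
Definition i1 : 'I_2 := @Ordinal 2 1 isT.

Lemma I2_cases (k : 'I_2) : k = i0 \/ k = i1.
Proof. case: k => [[|[|m]]] Hm; [left|right|by []]; exact: val_inj. Qed.

Lemma sum2 (F : 'I_2 -> rat) : \sum_i F i = F i0 + F i1.
Proof.
rewrite !big_ord_recl big_ord0 addr0; congr (F _ + F _); exact: val_inj.
Qed.
Lemma sum2n (F : 'I_2 -> nat) : (\sum_i F i)%N = (F i0 + F i1)%N.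
Proof.
rewrite !big_ord_recl big_ord0 addn0; congr (F _ + F _)%N; exact: val_inj.
Qed.

Lemma config2 (nu : {ffun 'I_2 -> nat}) : is_config 1 nu ->
  (nu i0 = 1 /\ nu i1 = 0)%N \/ (nu i0 = 0 /\ nu i1 = 1)%N.
Proof.
rewrite /is_config sum2n; case: (nu i0) => [|[|a]]; case: (nu i1) => [|[|b]] //=;
  try (by left); try (by right); by rewrite ?addnS.
Qed.

Lemma strat2 (s : {ffun 'I_2 -> rat}) : is_leader_strategy s ->
  0 <= s i0 /\ 0 <= s i1 /\ s i0 + s i1 = 1.
Proof. by case=> H; rewrite sum2 => ->. Qed.

Definition half : {ffun 'I_2 -> rat} := [ffun _ => 1/2].
Lemma half_strat : is_leader_strategy half.
Proof. split; first by move=> i; rewrite ffunE; lra. rewrite sum2 !ffunE; lra. Qed.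

Definition nu10 : {ffun 'I_2 -> nat} := [ffun k => if k == i0 then 1%N else 0%N].
Definition nu01 : {ffun 'I_2 -> nat} := [ffun k => if k == i0 then 0%N else 1%N].

Lemma lcost2 cl (s : {ffun 'I_2 -> rat}) nu :
  lcost cl s nu = s i0 * cl i0 (nu i0).+1 + s i1 * cl i1 (nu i1).+1.
Proof. by rewrite /lcost sum2. Qed.

Definition cla : 'I_2 -> nat -> rat := fun _ x => x%:R.
Definition cfa : 'I_2 -> nat -> rat :=
  fun _ x => match x with 0 => 0 | 1 => 2 | _ => 1 end.
Definition clb : 'I_2 -> nat -> rat :=
  fun _ x => match x with 1 => 2 | _ => 0 end.
Definition cfb : 'I_2 -> nat -> rat := fun _ x => x%:R.

Lemma NE_a (s : {ffun 'I_2 -> rat}) (nu : {ffun 'I_2 -> nat}) : is_NE 1 cfa s nu ->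
  (nu i0 = 1%N /\ nu i1 = 0%N /\ s i1 <= s i0) \/ (nu i0 = 0%N /\ nu i1 = 1%N /\ s i0 <= s i1).
Proof.
case=> /config2 [[h0 h1]|[h0 h1]] H.
- left; do 2 split => //; have := H i0 i1; rewrite h0 h1 /fcost /cfa /=.
  move=> /(_ isT isT) h; lra.
- right; do 2 split => //; have := H i1 i0; rewrite h0 h1 /fcost /cfa /=.
  move=> /(_ isT isT) h; lra.
Qed.

Lemma NE_b (s : {ffun 'I_2 -> rat}) (nu : {ffun 'I_2 -> nat}) : is_NE 1 cfb s nu ->
  (nu i0 = 1%N /\ nu i1 = 0%N /\ s i0 <= s i1) \/ (nu i0 = 0%N /\ nu i1 = 1%N /\ s i1 <= s i0).
Proof.
case=> /config2 [[h0 h1]|[h0 h1]] H.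
- left; do 2 split => //; have := H i0 i1; rewrite h0 h1 /fcost /cfb /=.
  move=> /(_ isT isT) h; lra.
- right; do 2 split => //; have := H i1 i0; rewrite h0 h1 /fcost /cfb /=.
  move=> /(_ isT isT) h; lra.
Qed.

Lemma NE_intro (cf : 'I_2 -> nat -> rat) (s : {ffun 'I_2 -> rat}) (nu : {ffun 'I_2 -> nat}) : is_config 1 nu ->
  (forall i j, (0 < nu i)%N -> j != i -> fcost cf s i (nu i) <= fcost cf s j (nu j).+1) ->
  is_NE 1 cf s nu.
Proof. by split. Qed.

Lemma c10 : is_config 1 nu10. Proof. by rewrite /is_config sum2n !ffunE. Qed.
Lemma c01 : is_config 1 nu01. Proof. by rewrite /is_config sum2n !ffunE. Qed.

Lemma NE_a10 (s : {ffun 'I_2 -> rat}) : s i1 <= s i0 -> is_NE 1 cfa s nu10.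
Proof.
move=> h; apply: NE_intro c10 _ => i j.
case: (I2_cases i) => ->; case: (I2_cases j) => -> //; rewrite !ffunE /= /fcost /cfa /= => hi _; (try by []); lra.
Qed.
Lemma NE_a01 (s : {ffun 'I_2 -> rat}) : s i0 <= s i1 -> is_NE 1 cfa s nu01.
Proof.
move=> h; apply: NE_intro c01 _ => i j.
case: (I2_cases i) => ->; case: (I2_cases j) => -> //; rewrite !ffunE /= /fcost /cfa /= => hi _; (try by []); lra.
Qed.
Lemma NE_b10 (s : {ffun 'I_2 -> rat}) : s i0 <= s i1 -> is_NE 1 cfb s nu10.
Proof.
move=> h; apply: NE_intro c10 _ => i j.
case: (I2_cases i) => ->; case: (I2_cases j) => -> //; rewrite !ffunE /= /fcost /cfb /= => hi _; (try by []); lra.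
Qed.
Lemma NE_b01 (s : {ffun 'I_2 -> rat}) : s i1 <= s i0 -> is_NE 1 cfb s nu01.
Proof.
move=> h; apply: NE_intro c01 _ => i j.
case: (I2_cases i) => ->; case: (I2_cases j) => -> //; rewrite !ffunE /= /fcost /cfb /= => hi _; (try by []); lra.
Qed.

Lemma low_a (s : {ffun 'I_2 -> rat}) (nu : {ffun 'I_2 -> nat}) : is_leader_strategy s -> is_NE 1 cfa s nu ->
  3/2 <= lcost cla s nu /\ (lcost cla s nu <= 3/2 -> s i0 = 1/2 /\ s i1 = 1/2).
Proof.
move=> /strat2 [p0 [p1 ps]] /NE_a [[h0 [h1 h]]|[h0 [h1 h]]];
  rewrite lcost2 h0 h1 /cla /=; split; try lra; move=> h'; split; lra.
Qed.
Lemma low_b (s : {ffun 'I_2 -> rat}) (nu : {ffun 'I_2 -> nat}) : is_leader_strategy s -> is_NE 1 cfb s nu ->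
  1 <= lcost clb s nu /\ (lcost clb s nu <= 1 -> s i0 = 1/2 /\ s i1 = 1/2).
Proof.
move=> /strat2 [p0 [p1 ps]] /NE_b [[h0 [h1 h]]|[h0 [h1 h]]];
  rewrite lcost2 h0 h1 /clb /=; split; try lra; move=> h'; split; lra.
Qed.

Lemma half_a (nu : {ffun 'I_2 -> nat}) : is_NE 1 cfa half nu -> lcost cla half nu = 3/2.
Proof.
move=> /NE_a [[h0 [h1 h]]|[h0 [h1 h]]]; rewrite lcost2 h0 h1 /cla !ffunE /=; lra.
Qed.
Lemma half_b (nu : {ffun 'I_2 -> nat}) : is_NE 1 cfb half nu -> lcost clb half nu = 1.
Proof.
move=> /NE_b [[h0 [h1 h]]|[h0 [h1 h]]]; rewrite lcost2 h0 h1 /clb !ffunE /=; lra.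
Qed.

Lemma all2 (s : {ffun 'I_2 -> rat}) : s i0 = 1/2 /\ s i1 = 1/2 -> forall k, s k = 1/2.
Proof. by case=> h0 h1 k; case: (I2_cases k) => ->. Qed.

Lemma half_le : half i1 <= half i0. Proof. by rewrite !ffunE. Qed.

Theorem mainTheorem18 :
  (exists cl cf : 'I_2 -> nat -> rat,
     (forall k, cost_fun_zero (cl k) /\ cost_fun_zero (cf k)) /\
     (forall k, cl k 1%N = 1 /\ cl k 2%N = 2 /\ cf k 1%N = 2 /\ cf k 2%N = 1) /\
     (forall k, weakly_monotonic (cl k)) /\
     (forall k, ~ weakly_monotonic (cf k)) /\
     (exists s nu, is_OSE 1 cl cf s nu) /\
     (forall s nu, is_OSE 1 cl cf s nu -> forall k, s k = 1 / 2) /\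
     (exists s nu, is_PSE 1 cl cf s nu) /\
     (forall s nu, is_PSE 1 cl cf s nu -> forall k, s k = 1 / 2))
  /\
  (exists cl cf : 'I_2 -> nat -> rat,
     (forall k, cost_fun_zero (cl k) /\ cost_fun_zero (cf k)) /\
     (forall k, cl k 1%N = 2 /\ cl k 2%N = 0 /\ cf k 1%N = 1 /\ cf k 2%N = 2) /\
     (forall k, weakly_monotonic (cf k)) /\
     (forall k, ~ weakly_monotonic (cl k)) /\
     (exists s nu, is_OSE 1 cl cf s nu) /\
     (forall s nu, is_OSE 1 cl cf s nu -> forall k, s k = 1 / 2) /\
     (exists s nu, is_PSE 1 cl cf s nu) /\
     (forall s nu, is_PSE 1 cl cf s nu -> forall k, s k = 1 / 2)).
Proof.
split.
- exists cla, cfa.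
  split; first by move=> k; split.
  split; first by move=> k; rewrite /cla /cfa /=.
  split; first by move=> k x; rewrite /cla ler_nat.
  split; first by move=> k H; have := H 1%N; rewrite /cfa /=; move=> h; lra.
  split.
    exists half, nu10; split; first exact: half_strat.
    split; first exact: NE_a10 half_le.
    move=> s' nu' hs hn; rewrite half_a; last exact: NE_a10 half_le.
    by case: (low_a hs hn).
  split.
    move=> s nu [hs [hn hopt]]; apply: all2.
    have := hopt _ _ half_strat (NE_a10 half_le); rewrite half_a; last exact: NE_a10 half_le.
    by case: (low_a hs hn) => _; apply.
  split.
    exists half, nu10; split; first exact: half_strat.
    split; first exact: NE_a10 half_le.
    split; first by move=> nu' hn; rewrite !half_a //; exact: NE_a10 half_le.
    move=> s' hs; rewrite half_a; last exact: NE_a10 half_le.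
    have [h|h] := lerP (s' i1) (s' i0).
      by exists nu10; [exact: NE_a10 | case: (low_a hs (NE_a10 h))].
    have h' := ltW h.
    by exists nu01; [exact: NE_a01 | case: (low_a hs (NE_a01 h'))].
  move=> s nu [hs [hn [hmax hpes]]]; apply: all2.
  have [nu' hn' hle] := hpes _ half_strat; move: hle; rewrite half_a //.
  by case: (low_a hs hn) => _; apply.
- exists clb, cfb.
  split; first by move=> k; split.
  split; first by move=> k; rewrite /clb /cfb /=.
  split; first by move=> k x; rewrite /cfb ler_nat.
  split; first by move=> k H; have := H 1%N; rewrite /clb /=; move=> h; lra.
  have hh : is_NE 1 cfb half nu10 by apply: NE_b10; rewrite !ffunE.
  split.
    exists half, nu10; split; first exact: half_strat.
    split; first exact: hh.
    move=> s' nu' hs hn; rewrite half_b //.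
    by case: (low_b hs hn).
  split.
    move=> s nu [hs [hn hopt]]; apply: all2.
    have := hopt _ _ half_strat hh; rewrite half_b //.
    by case: (low_b hs hn) => _; apply.
  split.
    exists half, nu10; split; first exact: half_strat.
    split; first exact: hh.
    split; first by move=> nu' hn; rewrite !half_b.
    move=> s' hs; rewrite half_b //.
    have [h|h] := lerP (s' i0) (s' i1).
      by exists nu10; [exact: NE_b10 | case: (low_b hs (NE_b10 h))].
    have h' := ltW h.
    by exists nu01; [exact: NE_b01 | case: (low_b hs (NE_b01 h'))].
  move=> s nu [hs [hn [hmax hpes]]]; apply: all2.
  have [nu' hn' hle] := hpes _ half_strat; move: hle; rewrite half_b //.
  by case: (low_b hs hn) => _; apply.
Qed.
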